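(* Let $k\in\mathbb{N}$. Every tree $T$ with $k$ edges contains a vertex $v\in V(T)$ such that (1) there exists a partition of the forest $T-v$ into two vertex-disjoint subforests $F_1,F_2$ satisfying $k/2\le |F_1|\le \lfloor 2k/3\rfloor$, and (2) there exists a partition of the forest $T-v$ into three vertex-disjoint subforests $F_1',F_2',F_3'$, each with at most $\lceil k/2\rceil$ vertices, such that $F_3'$ is either empty or a tree.
   Context: $|F|$ denotes the number of vertices of a graph $F$. $T-v$ is the forest obtained from $T$ by deleting $v$. *)

(* Defs.v *)
(* Simple graphs as symmetric irreflexive relations on a finType. *)
From mathcomp Require Import all_boot.
Set Implicit Arguments. Unset Strict Implicit. Unset Printing Implicit Defensive.

Section Graphs.
Variable T : finType.

Definition simple_graph (e : rel T) : Prop := symmetric e /\ irreflexive e.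

Definition edges (e : rel T) : {set {set T}} :=
  [set [set x; y] | x in T, y in T & e x y].

Definition induced (e : rel T) (A : {set T}) : rel T :=
  [rel x y | [&& e x y, x \in A & y \in A]].

Definition connected_on (e : rel T) (A : {set T}) : Prop :=
  forall x y, x \in A -> y \in A -> connect (induced e A) x y.

(* the induced subgraph on A has no cycle (a cycle = closed path on at
   least 3 distinct vertices) *)
Definition acyclic_on (e : rel T) (A : {set T}) : Prop :=
  ~ exists (x : T) (p : seq T),
      [/\ path (induced e A) x p, uniq (x :: p), 2 <= size p
        & induced e A (last x p) x].

Definition tree_on (e : rel T) (A : {set T}) : Prop :=
  A != set0 /\ connected_on e A /\ acyclic_on e A.

Definition is_tree (e : rel T) : Prop := tree_on e [set: T].

(* no edge of T - v joins two different parts: the parts are subforests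
   whose union (vertices and edges) is the forest T - v *)
Definition respects_edges (e : rel T) (v : T) (part : T -> nat) : Prop :=
  forall x y, e x y -> x != v -> y != v -> part x = part y.

End Graphs.

(* Main.v *)
Require Import Defs.
From mathcomp Require Import all_boot zify.
Set Implicit Arguments. Unset Strict Implicit. Unset Printing Implicit Defensive.

Lemma uphalf_bounds k : k <= 2 * uphalf k <= k.+1.
Proof. have := uphalfK k; rewrite -muln2 mulnC => ->; by case: (odd k); rewrite /= ?leqnn ?leqnSn // ?add1n ?leqnSn. Qed.

Lemma ar_single k h w : k != 1 -> k <= 2 * h <= k.+1 -> w <= h -> 3 * w <= 2 * k.
Proof. lia. Qed.

Lemma ar_key k s wb r c : s = wb + r -> (k <= 2 * r -> s <= r) -> 0 < wb ->
  (k <= 2 * (wb + c) -> s <= wb + c) -> k = s + c -> 2 * s <= k + wb.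
Proof. lia. Qed.

Lemma ar_fin k s wb wb' : 2 * s <= k + wb -> 2 * s <= k + wb' -> wb + wb' <= s -> 3 * s <= 2 * k.
Proof. lia. Qed.

Lemma ar_p2 k h w1 q l c : k = w1 + (q + l) -> k <= 2 * h -> h < l -> h < c + q -> c <= w1 -> False.
Proof. lia. Qed.

Section Abs.
Variable X : finType.
Variable w : X -> nat.

Lemma sum_sub (Q : {set X}) B : B \in Q -> w B <= \sum_(i in Q) w i.
Proof. by move=> BQ; rewrite (big_setD1 B BQ) /= leq_addr. Qed.

Lemma part1_abs (P : {set X}) (k : nat) : k != 1 -> \sum_(B in P) w B = k ->
  (forall B, B \in P -> 0 < w B <= uphalf k) ->
  exists2 Q : {set X}, Q \subset P & k <= 2 * \sum_(B in Q) w B /\ 3 * \sum_(B in Q) w B <= 2 * k.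
Proof.
move=> k1 sP wP.
have hk := uphalf_bounds k.
case: (boolP [exists B in P, k <= 2 * w B]).
  case/exists_inP => B BP kB; exists [set B]; first by rewrite sub1set.
  rewrite big_set1; split => //.
  by case/andP: (wP B BP) => _ wh; apply: ar_single k1 hk wh.
rewrite negb_exists_in => /forall_inP small.
pose S := [pred Q : {set X} | (Q \subset P) && (k <= 2 * \sum_(B in Q) w B)].
have S0 : S P by rewrite /= subxx sP leq_pmull.
case: (arg_minnP (fun Q : {set X} => \sum_(B in Q) w B) S0) => Q /andP [QP kQ] minP.
exists Q => //; split => //.
set s := \sum_(B in Q) w B.
rewrite leqNgt; apply/negP => big.
have sPQ : k = s + \sum_(B in P :\: Q) w B by rewrite -sP (big_setID Q) /= (setIidPr QP).
have key : forall B, B \in Q -> 2 * s <= k + w B.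
  move=> B BQ.
  have BP : B \in P by apply: (subsetP QP).
  have nBPQ : B \notin P :\: Q by rewrite !inE BQ.
  apply: (ar_key (r := \sum_(i in Q :\ B) w i) (c := \sum_(i in P :\: Q) w i)) => //.
  - by rewrite /s (big_setD1 B BQ).
  - move=> H; apply: (minP (Q :\ B)); rewrite /= H andbT.
    exact: subset_trans (subD1set Q B) QP.
  - by case/andP: (wP B BP).
  - move=> H; rewrite -(big_setU1 _ nBPQ) /=; apply: (minP (B |: (P :\: Q))).
    by rewrite /= (big_setU1 _ nBPQ) /= H andbT subUset sub1set BP subsetDl.
have : Q != set0.
  apply/eqP => Q0; move: big; rewrite /s Q0 big_set0; lia.
case/set0Pn => B BQ.
have : Q :\ B != set0.
  apply/eqP => Q0; have BP : B \in P by apply: (subsetP QP).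
  have := small B BP; move: kQ; rewrite /s (big_setD1 B BQ) Q0 big_set0 /= addn0 => kQ2 sm; by rewrite kQ2 in sm.
case/set0Pn => B' B'Q.
have B'Q2 : B' \in Q by move: B'Q; rewrite !inE => /andP [].
have hsum : w B + w B' <= s by rewrite /s (big_setD1 B BQ) /= leq_add2l sum_sub.
have := ar_fin (key B BQ) (key B' B'Q2) hsum.
by rewrite leqNgt big.
Qed.

Lemma part2_abs (P : {set X}) (k : nat) : \sum_(B in P) w B = k ->
  (forall B, B \in P -> 0 < w B <= uphalf k) ->
  exists Q1 Q2 Q3 : {set X},
    [/\ Q1 :|: Q2 :|: Q3 = P,
        [/\ [disjoint Q1 & Q2], [disjoint Q1 & Q3] & [disjoint Q2 & Q3]],
        [/\ \sum_(B in Q1) w B <= uphalf k, \sum_(B in Q2) w B <= uphalf k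
          & \sum_(B in Q3) w B <= uphalf k]
      & Q3 = set0 \/ exists2 B, B \in P & Q3 = [set B]].
Proof.
move=> sP wP.
have hk := uphalf_bounds k.
case: (set_0Vmem P) => [P0 | [B0 B0P]].
  exists set0, set0, set0; rewrite !big_set0 !setU0 P0; split => //; last by left.
  by split; rewrite -setI_eq0 setI0.
case: (arg_maxnP w B0P) => B1 B1P maxP.
have B1P' : B1 \in P := B1P.
pose Rr := P :\ B1.
pose S := [pred Q : {set X} | (Q \subset Rr) && (\sum_(B in Q) w B <= uphalf k)].
have S0 : S set0 by rewrite /= sub0set big_set0.
case: (arg_maxnP (fun Q : {set X} => \sum_(B in Q) w B) S0) => Q /andP [QR Qh] maxQ.
exists Q, (Rr :\: Q), [set B1]; split.
- apply/setP => x; rewrite !inE.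
  case: (eqVneq x B1) => [->|nx] /=; first by rewrite orbT B1P'.
  rewrite orbF; case xQ: (x \in Q) => //=.
  by have := subsetP QR x xQ; rewrite !inE => /andP [_ ->].
- split; rewrite -setI_eq0; apply/eqP/setP => x; rewrite !inE.
  + by case: (x \in Q); rewrite ?andbF.
  + apply/negP => /andP [xQ /eqP xB]; have := subsetP QR x xQ; by rewrite !inE xB eqxx.
  + by case: (eqVneq x B1); rewrite ?andbF ?andbT /= ?andbF.
- split => //; last by rewrite big_set1; case/andP: (wP B1 B1P).
  rewrite leqNgt; apply/negP => big.
  have : Rr :\: Q != set0 by apply/eqP => L0; move: big; rewrite L0 big_set0.
  case/set0Pn => c cL.
  have cQ : c \notin Q by move: cL; rewrite !inE => /andP [].
  have cR : c \in Rr by move: cL; rewrite !inE => /andP [_ ->].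
  have cP : c \in P by move: cR; rewrite !inE => /andP [].
  have hc : uphalf k < w c + \sum_(B in Q) w B.
    rewrite ltnNge; apply/negP => H.
    have := maxQ (c |: Q); rewrite /= subUset sub1set cR QR (big_setU1 _ cQ) /= H => /(_ isT).
    rewrite -{2}(add0n (\sum_(B in Q) w B)) leq_add2r leqn0 => /eqP wc0.
    by case/andP: (wP c cP); rewrite wc0.
  apply: (ar_p2 (k := k) (w1 := w B1) (q := \sum_(B in Q) w B) _ _ big hc (maxP c cP)).
    by rewrite -sP (big_setD1 B1 B1P) /= (big_setID Q) /= (setIidPr QR).
  by case/andP: hk.
- by right; exists B1.
Qed.

End Abs.

Lemma ar_h b k h : 2 * b <= k.+1 -> k <= 2 * h <= k.+1 -> b <= h.
Proof. lia. Qed.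

Section Cov.
Variable T : finType.
Variable P : {set {set T}}.
Hypothesis tP : trivIset P.

Lemma cover_card (Q : {set {set T}}) : Q \subset P -> #|cover Q| = \sum_(B in Q) #|B|.
Proof. by move=> QP; rewrite (eqP (trivIsetS QP tP)). Qed.

Lemma cover_disj (Q1 Q2 : {set {set T}}) : Q1 \subset P -> Q2 \subset P -> [disjoint Q1 & Q2] ->
  [disjoint cover Q1 & cover Q2].
Proof.
move=> Q1P Q2P; rewrite -!setI_eq0 => /eqP dj; apply/eqP/setP => x; rewrite !inE.
apply/negP => /andP [/bigcupP [B1 B1Q xB1] /bigcupP [B2 B2Q xB2]].
have e1 := def_pblock tP (subsetP Q1P _ B1Q) xB1.
have e2 := def_pblock tP (subsetP Q2P _ B2Q) xB2.
have : B1 \in Q1 :&: Q2 by rewrite inE B1Q -e1 e2 B2Q.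
by rewrite dj inE.
Qed.

Lemma cover_mem (Q : {set {set T}}) x : Q \subset P -> x \in cover P ->
  (x \in cover Q) = (pblock P x \in Q).
Proof.
move=> QP xP; apply/bigcupP/idP => [[B BQ xB]| H].
  by rewrite (def_pblock tP (subsetP QP _ BQ) xB).
by exists (pblock P x) => //; rewrite mem_pblock.
Qed.

Lemma cover_U (Q1 Q2 : {set {set T}}) : cover (Q1 :|: Q2) = cover Q1 :|: cover Q2.
Proof. by rewrite /cover bigcup_setU. Qed.

End Cov.

Lemma ar1 a b c : a + b <= c -> c < 2 * b -> 2 * a <= c.
Proof. lia. Qed.

Section G.
Variable T : finType.
Variable e : rel T.
Hypothesis esym : symmetric e.
Hypothesis eirr : irreflexive e.

Local Notation R D := (induced e D).
Local Notation conn D := (connect (induced e D)).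

Lemma R_sym (D : {set T}) : symmetric (R D).
Proof.
move=> x y; rewrite /induced /= esym.
by case: (x \in D); case: (y \in D); rewrite ?andbF ?andbT.
Qed.

Lemma conn_sym (D : {set T}) x y : conn D x y = conn D y x.
Proof. exact: (sym_connect_sym (R_sym D)). Qed.

Lemma R_sub (D1 D2 : {set T}) : D1 \subset D2 -> subrel (R D1) (R D2).
Proof.
move=> sub x y /= /and3P [exy xD yD].
by rewrite /induced /= exy (subsetP sub _ xD) (subsetP sub _ yD).
Qed.

Lemma conn_sub (D1 D2 : {set T}) x y : D1 \subset D2 -> conn D1 x y -> conn D2 x y.
Proof. by move=> sub; apply: connect_sub => a b h; apply: connect1; apply: R_sub h. Qed.

Lemma R_in (D : {set T}) x y : R D x y -> x \in D /\ y \in D.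
Proof. by case/and3P. Qed.

Lemma R_neq (D : {set T}) x y : R D x y -> x != y.
Proof. by case/and3P => exy _ _; apply/eqP => exy'; rewrite exy' eirr in exy. Qed.

Lemma path_in (D : {set T}) x p : path (R D) x p -> forall z, z \in p -> z \in D.
Proof.
elim: p x => [|y p IH] x //= /andP [Rxy pth] z; rewrite inE => /orP [/eqP ->|zp].
  by case: (R_in Rxy).
exact: IH pth z zp.
Qed.

Lemma conn_in (D : {set T}) x y : conn D x y -> x != y -> y \in D.
Proof.
move=> /connectP [p pth ->] nxy.
have := mem_last x p; rewrite inE => /orP [/eqP h|]; first by rewrite h eqxx in nxy.
exact: path_in pth _.
Qed.

Lemma path_restrict (D D' : {set T}) x p : path (R D) x p -> x \in D' -> (forall z, z \in p -> z \in D') ->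
  path (R D') x p.
Proof.
elim: p x => [|y p IH] x //= /andP [Rxy pth] xD' H.
have yD' : y \in D' by apply: H; rewrite inE eqxx.
rewrite IH //; last by move=> z zp; apply: H; rewrite inE zp orbT.
by case/and3P: Rxy => exy _ _; rewrite /induced /= exy xD' yD'.
Qed.

Lemma first_step (D : {set T}) u z : conn D u z -> u != z -> exists2 w, R D u w & conn (D :\ u) w z.
Proof.
move=> /connectP [p pth ->]; case/shortenP: pth => p' pth' uq _.
case: p' pth' uq => [|w p'] /=; first by rewrite eqxx.
move=> /andP [Ruw pth] uq _; exists w => //.
apply/connectP; exists p' => //.
move: uq; rewrite inE negb_or => /andP [/andP [nuw nup] _].
apply: (path_restrict pth).
  by rewrite !inE eq_sym nuw; case: (R_in Ruw).
move=> y yp; rewrite !inE (path_in pth yp) andbT.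
by apply/eqP => eyu; rewrite -eyu yp in nup.
Qed.

Lemma path_comp (D : {set T}) x p : forall x0, conn D x x0 -> path (R D) x0 p ->
  path (R (D :&: [set z | conn D x z])) x0 p.
Proof.
elim: p => [|y p IH] x0 //= Cx0 /andP [Rxy pth].
have Cy := connect_trans Cx0 (connect1 Rxy).
rewrite (IH y Cy pth) andbT.
by case/and3P: Rxy => exy xD yD; rewrite /induced /= exy !inE xD yD Cx0 Cy.
Qed.

Lemma conn_restrict (D : {set T}) x y : conn D x y -> connect (R (D :&: [set z | conn D x z])) x y.
Proof.
move=> /connectP [p pth ->]; apply/connectP; exists p => //.
by apply: path_comp pth; apply: connect0.
Qed.

Lemma acyclic_mono (A A' : {set T}) : A' \subset A -> acyclic_on e A -> acyclic_on e A'.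
Proof.
move=> sub ac [x [p [pth uq sz cl]]]; apply: ac; exists x, p; split => //.
  by apply: (sub_path (R_sub sub)); exact pth.
exact: R_sub sub _ _ cl.
Qed.

Lemma tp (A : {set T}) u v w : acyclic_on e A -> R A u w -> R A u v -> w != v -> ~~ conn (A :\ u) w v.
Proof.
move=> ac Ruw Ruv nwv; apply/negP => /connectP [p pth lst].
move: nwv; rewrite lst; move: Ruv; rewrite lst.
case/shortenP: pth => p' pth' uq _ Ruv nwl.
apply: ac; exists u, (w :: p'); split.
- rewrite /= Ruw /=; apply: (sub_path (R_sub (subD1set A u))); exact: pth'.
- rewrite cons_uniq uq andbT inE negb_or; apply/andP; split; first by rewrite (R_neq Ruw).
  apply/negP => up; have := path_in pth' up; by rewrite !inE eqxx.
- by case: p' {pth' uq Ruv} nwl => [|? ?] /=; rewrite ?eqxx.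
- by rewrite /= R_sym.
Qed.

Definition Bs (A : {set T}) v u := [set z | conn (A :\ v) u z].

Lemma u_in_B (A : {set T}) v u : u \in Bs A v u.
Proof. by rewrite inE connect0. Qed.

Lemma u_notin_B (A : {set T}) u w : w != u -> u \notin Bs A u w.
Proof.
move=> nwu; rewrite inE; apply/negP => C.
by have := conn_in C nwu; rewrite !inE eqxx.
Qed.

Lemma B_subA (A : {set T}) v u : u \in A -> Bs A v u \subset A.
Proof.
move=> uA; apply/subsetP => z; rewrite inE => C.
case: (eqVneq u z) => [<- //|nuz].
by have := conn_in C nuz; rewrite !inE => /andP [].
Qed.

Lemma BSub (A : {set T}) u v w : acyclic_on e A -> R A v u -> R A u w -> w != v ->
  Bs A u w \subset Bs A v u.
Proof.
move=> ac Rvu Ruw nwv.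
have Ruv : R A u v by rewrite R_sym.
have ntp := tp ac Ruw Ruv nwv.
apply/subsetP => z; rewrite !inE => C.
have C' := conn_restrict C.
have C2 : conn (A :\ v) w z.
  apply: conn_sub C'; apply/subsetP => y; rewrite !inE => /andP [/andP [nyu yA] Cy].
  rewrite yA andbT; apply/eqP => yv; by rewrite -yv Cy in ntp.
apply: connect_trans C2; apply: connect1.
case/and3P: Ruw => euw uA wA.
rewrite /induced /= euw !inE uA wA !andbT.
by rewrite nwv eq_sym (R_neq Rvu).
Qed.

Lemma B_disj (A : {set T}) u v : acyclic_on e A -> R A u v -> [disjoint Bs A u v & Bs A v u].
Proof.
move=> ac Ruv; rewrite -setI_eq0; apply/eqP/setP => z; rewrite !inE.
apply/negP => /andP [C1 C2].
have nzu : u != z.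
  apply/eqP => uz; rewrite -uz in C1.
  have Rvu : R A v u by rewrite R_sym.
  by have := conn_in C1 (R_neq Rvu); rewrite !inE eqxx.
have [w Ruw C3] := first_step C2 nzu.
have wv : w != v by case/and3P: Ruw => _ _; rewrite !inE => /andP [].
have Ruw' : R A u w by apply: R_sub Ruw; apply: subD1set.
have C4 : conn (A :\ u) w z.
  apply: conn_sub C3; apply/subsetP => y; rewrite !inE => /and3P [-> _ ->] //.
have C5 : conn (A :\ u) w v by apply: connect_trans C4 _; rewrite conn_sym.
by have := tp ac Ruw' Ruv wv; rewrite C5.
Qed.

Lemma leaf (A : {set T}) : tree_on e A -> 1 < #|A| ->
  exists u v, [/\ R A u v, (forall w, R A u w -> w = v) & tree_on e (A :\ u)].
Proof.
case=> [ne [cn ac]] /card_gt1P [a [b [aA bA nab]]].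
have [a' Raa' _] := first_step (cn a b aA bA) nab.
pose S := [pred p : T * T | R A p.1 p.2].
have S0 : S (a, a') by [].
case: (arg_minnP (fun p => #|Bs A p.1 p.2|) S0) => [[v u]] /= Rvu minP.
have uniqn : forall w, R A u w -> w = v.
  move=> w Ruw; apply/eqP; apply/negPn/negP => nwv.
  have sub := BSub ac Rvu Ruw nwv.
  have pr : Bs A u w \proper Bs A v u.
    apply/properP; split => //; exists u; first exact: u_in_B.
    by apply: u_notin_B; rewrite eq_sym (R_neq Ruw).
  have := minP (u, w) Ruw; by rewrite leqNgt (proper_card pr).
have Ruv : R A u v by rewrite R_sym.
exists u, v; split => //.
have key : forall x, x \in A :\ u -> conn (A :\ u) v x.
  move=> x; rewrite !inE => /andP [nxu xA].
  have uA : u \in A by case: (R_in Ruv).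
  have nux : u != x by rewrite eq_sym.
  have [w Ruw C] := first_step (cn u x uA xA) nux.
  by rewrite -(uniqn w Ruw).
split; last split.
- apply/set0Pn; exists v; rewrite !inE eq_sym (R_neq Ruv); by case: (R_in Ruv).
- move=> x y xA yA; apply: connect_trans (key y yA); rewrite conn_sym; exact: key.
- exact: acyclic_mono (subD1set A u) ac.
Qed.

Definition edgesA (A : {set T}) := [set [set x; y] | x in A, y in A & e x y].

Lemma edge_count n (A : {set T}) : #|A| = n.+1 -> tree_on e A -> #|edgesA A| = n.
Proof.
elim: n A => [|n IH] A cA tA.
  have /cards1P [a ->] : #|A| == 1 by rewrite cA.
  apply/eqP; rewrite cards_eq0; apply/eqP/setP => E; rewrite inE.
  apply/negP => /imset2P [x y]; rewrite !inE => /eqP -> /andP [/eqP ->].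
  by rewrite eirr.
have c1 : 1 < #|A| by rewrite cA.
have [u [v [Ruv uniqn tA']]] := leaf tA c1.
have [uA vA] := R_in Ruv.
have cA' : #|A :\ u| = n.+1 by move: cA; rewrite (cardsD1 u) uA add1n => -[].
have IHA := IH _ cA' tA'.
have -> : edgesA A = [set u; v] |: edgesA (A :\ u).
  apply/setP => E; rewrite !inE; apply/imset2P/orP.
  - case=> x y; rewrite !inE => xA /andP [yA exy] ->.
    case: (eqVneq x u) => [xu|nxu].
      left; rewrite xu in exy *; have := uniqn y; rewrite /induced /= exy uA yA => /(_ isT) ->.
      by [].
    case: (eqVneq y u) => [yu|nyu].
      left; rewrite yu in exy *; rewrite esym in exy.
      have := uniqn x; rewrite /induced /= exy uA xA => /(_ isT) ->.
      by rewrite setUC.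
    right; apply/imset2P; exists x y; rewrite ?inE ?nxu ?nyu ?xA ?yA ?exy //.
  - case=> [/eqP ->|/imset2P [x y]].
      exists u v; rewrite ?inE ?uA ?vA //; by case/and3P: Ruv.
    rewrite !inE => /andP [_ xA] /andP [/andP [_ yA] exy] ->; by exists x y; rewrite ?inE ?xA ?yA.
rewrite cardsU1 IHA.
suff -> : [set u; v] \notin edgesA (A :\ u) by [].
apply/negP => /imset2P [x y]; rewrite !inE => /andP [nxu _] /andP [/andP [nyu _] _] E.
have : u \in [set u; v] by rewrite !inE eqxx.
by rewrite E !inE => /orP [/eqP ux|/eqP uy]; [rewrite ux eqxx in nxu | rewrite uy eqxx in nyu].
Qed.

Lemma centroid (A : {set T}) : tree_on e A ->
  exists2 c, c \in A & forall z, z \in A :\ c -> 2 * #|Bs A c z| <= #|A|.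
Proof.
move=> tA; case: (tA) => [ne [cn ac]].
case: (boolP [exists c in A, [forall z in A :\ c, 2 * #|Bs A c z| <= #|A|]]).
  by case/exists_inP => c cA /forall_inP H; exists c.
rewrite negb_exists_in => /forall_inP H; exfalso.
have [c0 c0A] := set0Pn _ ne.
have := H c0 c0A; rewrite negb_forall_in => /exists_inP [z zA big].
have zA' := zA; move: zA'; rewrite !inE => /andP [nzc zA2].
have nc0z : c0 != z by rewrite eq_sym.
have [u0 Ru0 Cu0] := first_step (cn c0 z c0A zA2) nc0z.
pose S := [pred p : T * T | R A p.1 p.2 && (#|A| < 2 * #|Bs A p.1 p.2|)].
have S0 : S (c0, u0).
  rewrite /= Ru0 /=; rewrite -ltnNge in big; apply: (leq_trans big).
  rewrite leq_mul2l /=; apply: subset_leq_card; apply/subsetP => y; rewrite !inE => Cy.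
  exact: connect_trans Cu0 Cy.
case: (arg_minnP (fun p => #|Bs A p.1 p.2|) S0) => [[v u]] /= /andP [Rvu bigvu] minP.
have uA : u \in A by case: (R_in Rvu).
clear z zA nzc zA2 nc0z Cu0 big.
have := H u uA; apply/negP; rewrite negbK; apply/forall_inP => z zA.
have zA' := zA; move: zA'; rewrite !inE => /andP [nzu zA2].
have nuz : u != z by rewrite eq_sym.
have [w Ruw Cw] := first_step (cn u z uA zA2) nuz.
have sub1 : Bs A u z \subset Bs A u w.
  apply/subsetP => y; rewrite !inE => Cy; exact: connect_trans Cw Cy.
apply: (leq_trans (leq_mul (leqnn 2) (subset_leq_card sub1))).
case: (eqVneq w v) => [wv|nwv].
  rewrite wv.
  have Ruv : R A u v by rewrite R_sym.
  have dj := B_disj ac Ruv.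
  have vA : v \in A by case: (R_in Rvu).
  have sU : Bs A u v :|: Bs A v u \subset A by rewrite subUset !B_subA.
  have := subset_leq_card sU; rewrite cardsU (disjoint_setI0 dj) cards0 subn0.
  by move=> H1; apply: ar1 H1 bigvu.
have sub := BSub ac Rvu Ruw nwv.
have pr : Bs A u w \proper Bs A v u.
  apply/properP; split => //; exists u; first exact: u_in_B.
  by apply: u_notin_B; rewrite eq_sym (R_neq Ruw).
rewrite leqNgt; apply/negP => bg.
have := minP (u, w); rewrite /= Ruw bg => /(_ isT).
by rewrite leqNgt (proper_card pr).
Qed.

Lemma main_sec (k : nat) : k != 1 -> is_tree e -> #|edges e| = k ->
  exists v : T,
    (exists F1 F2 : {set T},
        [/\ F1 :|: F2 = [set: T] :\ v, [disjoint F1 & F2],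
            respects_edges e v (fun x => (x \in F1) : nat),
            k <= 2 * #|F1| & #|F1| <= (2 * k) %/ 3]) /\
    (exists F1 F2 F3 : {set T},
        [/\ F1 :|: F2 :|: F3 = [set: T] :\ v,
            [/\ [disjoint F1 & F2], [disjoint F1 & F3] & [disjoint F2 & F3]],
            respects_edges e v
              (fun x => if x \in F1 then 0 else if x \in F2 then 1 else 2),
            [/\ #|F1| <= uphalf k, #|F2| <= uphalf k & #|F3| <= uphalf k]
          & F3 = set0 \/ tree_on e F3]).
Proof.
move=> k1 tT cE.
have tT' : tree_on e [set: T] := tT.
have eE : edges e = edgesA [set: T].
  apply/setP => E; apply/imset2P/imset2P; case=> x y xin yin ->; exists x y => //;
  move: yin; rewrite !inE //.
have nT : #|[set: T]| = k.+1.
  case: (tT') => ne _.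
  move: ne; case E: #|[set: T]| => [|n] ne.
    by move: ne; rewrite -cards_eq0 E.
  by have := edge_count E tT'; rewrite -eE cE => ->.
have [c _ hc] := centroid tT'.
pose D := [set: T] :\ c.
pose Rc := fun x y => conn D x y.
have eqR : {in D & &, equivalence_rel Rc}.
  move=> x y z _ _ _; split; first exact: connect0.
  move=> Cxy; apply/idP/idP => H.
    by apply: connect_trans H; rewrite /Rc conn_sym.
  exact: connect_trans Cxy H.
pose P := equivalence_partition Rc D.
have partP := equivalence_partitionP eqR.
case/and3P: partP => /eqP covP tP P0.
have blk : forall B, B \in P -> exists2 x, x \in D & B = [set y in D | Rc x y].
  by move=> B /imsetP [x xD ->]; exists x.
have hk := uphalf_bounds k.
have sP : \sum_(B in P) #|B| = k.
  rewrite (eqP tP) covP; move: nT; rewrite (cardsD1 c) in_setT add1n => -[].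
  by [].
have wP : forall B, B \in P -> 0 < #|B| <= uphalf k.
  move=> B BP; rewrite card_gt0; apply/andP; split.
    by apply/eqP => B0; rewrite -B0 BP in P0.
  have [x xD ->] := blk B BP.
  apply: ar_h hk; rewrite -nT.
  apply: leq_trans (hc x xD); rewrite leq_mul2l /=; apply: subset_leq_card.
  by apply/subsetP => y; rewrite !inE => /andP [_ H].
have tree_blk : forall B, B \in P -> tree_on e B.
  move=> B BP; have [x xD defB] := blk B BP.
  split; last split.
  - by apply/set0Pn; exists x; rewrite defB inE xD; apply: connect0.
  - move=> y1 y2; rewrite defB !inE => /andP [y1D C1] /andP [y2D C2].
    have C12 : conn D y1 y2 by apply: connect_trans C2; rewrite /Rc conn_sym in C1 *.
    apply: conn_sub (conn_restrict C12).
    apply/subsetP => z; rewrite !inE => /andP [zD Cz]; rewrite zD /=.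
    exact: connect_trans C1 Cz.
  - by case: (tT') => _ [_ ac]; apply: acyclic_mono ac; apply: subsetT.
have samebl : forall x y, e x y -> x != c -> y != c -> forall Q : {set {set T}}, Q \subset P ->
    (x \in cover Q) = (y \in cover Q).
  move=> x y exy xc yc Q QP.
  have xD : x \in D by rewrite !inE xc.
  have yD : y \in D by rewrite !inE yc.
  have yx : y \in pblock P x.
    rewrite (pblock_equivalence_partition eqR xD yD); apply: connect1.
    by rewrite /induced /= exy xD yD.
  rewrite (cover_mem tP QP) ?covP // (cover_mem tP QP) ?covP //.
  by rewrite (same_pblock tP yx).
exists c; split.
  have [Q QP [kQ Q3]] := part1_abs (w := fun B : {set T} => #|B|) k1 sP wP.
  have QPQ : Q :|: (P :\: Q) = P.
    apply/setP => B; rewrite !inE; case BQ: (B \in Q) => //=.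
    by rewrite (subsetP QP _ BQ).
  have djQ : [disjoint Q & P :\: Q].
    by rewrite -setI_eq0; apply/eqP/setP => B; rewrite !inE; case: (B \in Q); rewrite ?andbF.
  exists (cover Q), (cover (P :\: Q)); split.
  - by rewrite -cover_U QPQ covP.
  - by apply: (cover_disj tP QP (subsetDl _ _) djQ).
  - by move=> x y exy xc yc; rewrite (samebl x y exy xc yc Q QP).
  - by rewrite (cover_card tP QP).
  - by rewrite (cover_card tP QP) leq_divRL // mulnC.
have [Q1 [Q2 [Q3 [EQ [d12 d13 d23] [s1 s2 s3] Q3s]]]] :=
  part2_abs (w := fun B : {set T} => #|B|) sP wP.
have Q1P : Q1 \subset P by rewrite -EQ -setUA subsetUl.
have Q2P : Q2 \subset P by rewrite -EQ -setUA subsetU // subsetUl orbT.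
have Q3P : Q3 \subset P by rewrite -EQ subsetUr.
exists (cover Q1), (cover Q2), (cover Q3); split.
- by rewrite -!cover_U EQ covP.
- by split; [apply: (cover_disj tP Q1P Q2P d12) | apply: (cover_disj tP Q1P Q3P d13) | apply: (cover_disj tP Q2P Q3P d23)].
- move=> x y exy xc yc.
  by rewrite (samebl x y exy xc yc Q1 Q1P) (samebl x y exy xc yc Q2 Q2P).
- by split; rewrite (cover_card tP)...
- case: Q3s => [->|[B BP ->]]; [left | right].
    by rewrite /cover big_set0.
  by rewrite /cover big_set1; apply: tree_blk.
Qed.

End G.

Theorem corollary3p4 (k : nat) (T : finType) (e : rel T) :
  k != 1 ->
  simple_graph e -> is_tree e -> #|edges e| = k ->
  exists v : T,
    (exists F1 F2 : {set T},
        [/\ F1 :|: F2 = [set: T] :\ v, [disjoint F1 & F2],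
            respects_edges e v (fun x => (x \in F1) : nat),
            k <= 2 * #|F1| & #|F1| <= (2 * k) %/ 3]) /\
    (exists F1 F2 F3 : {set T},
        [/\ F1 :|: F2 :|: F3 = [set: T] :\ v,
            [/\ [disjoint F1 & F2], [disjoint F1 & F3] & [disjoint F2 & F3]],
            respects_edges e v
              (fun x => if x \in F1 then 0 else if x \in F2 then 1 else 2),
            [/\ #|F1| <= uphalf k, #|F2| <= uphalf k & #|F3| <= uphalf k]
          & F3 = set0 \/ tree_on e F3]).
Proof.
move=> k1 [esym eirr] tT cE.
exact: (main_sec esym eirr k1 tT cE).
Qed.
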